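(* Let $G=(V,E)$ be a finite simple undirected graph with at least $2$ vertices. Then there exists a vertex $u\in V$ such that $C(G[V\setminus\{u\}])\le C(G)$.
   Context: For a vertex $u$ of a graph, $d_u$ is its degree and $T(u)$ the number of triangles containing $u$; the local clustering coefficient is $C(u)=\frac{2T(u)}{d_u(d_u-1)}$ if $d_u>1$ and $C(u)=0$ otherwise. The average clustering coefficient of a graph $H$ with $n\ge1$ vertices is $C(H)=\frac1n\sum_{u\in V(H)}C(u)$ (local coefficients computed in $H$). $G[S]$ denotes the subgraph induced by $S$. *)

(* Defs.v *)
(* A finite simple undirected graph is a symmetric, irreflexive
   relation e on a finType T; vertex set V = [set: T]. Induced subgraphs G[S]
   are handled by restricting neighbourhoods to S : {set T}. *)
From HB Require Import structures.
From mathcomp Require Import all_boot all_order all_algebra.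
Set Implicit Arguments. Unset Strict Implicit. Unset Printing Implicit Defensive.
Import Order.TTheory GRing.Theory Num.Theory.

Section Clustering.
Variables (T : finType) (e : rel T).

Definition nbhd (S : {set T}) (u : T) : {set T} := [set v in S | e u v].

Definition deg (S : {set T}) (u : T) : nat := #|nbhd S u|.

Definition tri (S : {set T}) (u : T) : nat :=
  #|[set P : {set T} | (P \subset nbhd S u) && (#|P| == 2)
       & [exists v in P, exists w in P, e v w]]|.

Definition local_cc (S : {set T}) (u : T) : rat :=
  if 1 < deg S u then (2 * (tri S u)%:R / ((deg S u)%:R * ((deg S u)%:R - 1)))%R
  else 0%R.

Definition avg_cc (S : {set T}) : rat :=
  ((#|S|%:R)^-1 * \sum_(u in S) local_cc S u)%R.

End Clustering.

(* Main.v *)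
Require Import Defs.
From HB Require Import structures.
From mathcomp Require Import all_boot all_order all_algebra.
From mathcomp Require Import ring lra.
Import Order.TTheory GRing.Theory Num.Theory.

Section Proof.
Variables (T : finType) (e : rel T) (e_irr : irreflexive e).

Let N w := nbhd e [set: T] w.
Let Tr w := [set P : {set T} | (P \subset N w) && (#|P| == 2)
       & [exists v in P, exists w in P, e v w]].

Lemma nbhdD1 u w : nbhd e [set~ u] w = N w :\ u.
Proof. by apply/setP=> v; rewrite /N /nbhd !inE. Qed.

Lemma nbhd_nonadj u w : ~~ e w u -> nbhd e [set~ u] w = N w.
Proof.
move=> H; rewrite nbhdD1; apply/setP=> v; rewrite /N /nbhd !inE.
by case: eqP => // ->; rewrite (negbTE H).
Qed.

Lemma lcc_nonadj u w : ~~ e w u -> local_cc e [set~ u] w = local_cc e [set: T] w.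
Proof. by move=> H; rewrite /local_cc /deg /tri nbhd_nonadj. Qed.

Lemma tri_D1 u w : tri e [set~ u] w = #|[set P in Tr w | u \notin P]|.
Proof.
rewrite /tri nbhdD1; apply: eq_card => P; rewrite !inE subsetD1.
by case: (P \subset N w); case: (u \in P); rewrite ?andbF ?andbT.
Qed.

Lemma dc w : \sum_(u in N w) #|[set P in Tr w | u \notin P]| = (#|N w| - 2) * #|Tr w|.
Proof.
transitivity (\sum_(u in N w) \sum_(P in Tr w) (u \notin P : nat)).
  apply: eq_bigr => u _; rewrite -sum1_card big_mkcond /= [RHS]big_mkcond.
  by apply: eq_bigr => P _; rewrite !inE; case: (u \in P) => /=; rewrite ?andbT ?andbF; case: ifP.
rewrite (exchange_big_dep xpredT) //= mulnC -sum_nat_const [RHS]big_mkcond; apply: eq_bigr => P _.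
case: ifP => HP; last by rewrite big_pred0 // => i; rewrite andbF.
under eq_bigl => i do rewrite andbT.
move: HP; rewrite inE => /andP [/andP [sPN /eqP cP] _].
transitivity #|N w :\: P|.
  rewrite -sum1_card big_mkcond /= [RHS]big_mkcond.
  by apply: eq_bigr => u _; rewrite !inE; case: (u \in P) => /=; rewrite ?andbT ?andbF //; case: ifP.
by rewrite cardsD (setIidPr sPN) cP.
Qed.

Lemma lcc_ge0 S w : (0 <= local_cc e S w)%R.
Proof.
rewrite /local_cc; case: ifP => // H.
have H1 : (1 <= (deg e S w)%:R :> rat)%R by rewrite ler1n ltnW.
apply: divr_ge0; first by rewrite mulr_ge0 ?ler0n.
by apply: mulr_ge0; [lra | lra].
Qed.

Lemma nbr_sum w : (\sum_(u in N w) local_cc e [set~ u] w <= #|N w|%:R * local_cc e [set: T] w)%R.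
Proof.
have degD1 u : u \in N w -> deg e [set~ u] w = (#|N w|).-1.
  by move=> Hu; rewrite /deg nbhdD1 (cardsD1 u (N w)) Hu.
case: (leqP #|N w| 2) => Hd.
  rewrite big1 ?mulr_ge0 ?ler0n ?lcc_ge0 // => u Hu.
  rewrite /local_cc degD1 //; case: ifP => //; case: #|N w| Hd => [|[|[|]]] //.
rewrite (eq_bigr (fun u => 2 * (#|[set P in Tr w | u \notin P]|)%:R /
   ((#|N w|.-1)%:R * ((#|N w|.-1)%:R - 1))))%R; last first.
  move=> u Hu; rewrite /local_cc degD1 // tri_D1.
  by case: #|N w| Hd => [|[|[|]]].
rewrite -mulr_suml -mulr_sumr -natr_sum dc /local_cc /deg -/(N w).
rewrite (_ : 1 < #|N w|); last by apply: ltn_trans Hd.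
have -> : tri e [set: T] w = #|Tr w| by [].
case: #|N w| Hd => [|[|[|d]]] // _.
rewrite (_ : d.+3 - 2 = d.+1) // /= natrM.
rewrite -[d.+3]addn3 -[d.+2]addn2 -[d.+1]addn1 !natrD.
have hd : (0 <= d%:R :> rat)%R by rewrite ler0n.
move: (#|Tr w|%:R)%R => t.
rewrite le_eqVlt; apply/orP; left; apply/eqP.
field; apply/andP; split; lra.
Qed.

Lemma per_w w : (\sum_(u | u != w) local_cc e [set~ u] w <= (#|T|.-1)%:R * local_cc e [set: T] w)%R.
Proof.
rewrite -(cardC1 w) mulr_natl -sumr_const.
rewrite (bigID (e w)) [X in (_ <= X)%R](bigID (e w)) /=.
apply: lerD.
  rewrite (eq_bigl (mem (N w))); last first.
    by move=> u; rewrite /N /nbhd !inE; case: eqP => // ->; rewrite e_irr.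
  rewrite [X in (_ <= X)%R](eq_bigl (mem (N w))); last first.
    by move=> u; rewrite /N /nbhd !inE; case: eqP => // ->; rewrite e_irr.
  by rewrite sumr_const -mulr_natl; apply: nbr_sum.
apply: ler_sum => u /andP [_ H]; by rewrite lcc_nonadj.
Qed.
End Proof.

Theorem mainTheorem7 (T : finType) (e : rel T)
  (e_sym : symmetric e) (e_irr : irreflexive e) (hV : 2 <= #|T|) :
  exists u : T, (avg_cc e [set~ u] <= avg_cc e [set: T])%R.
Proof.
have n0 : (0 < #|T|%:R :> rat)%R by rewrite ltr0n; apply: leq_trans hV.
have n1 : (0 < (#|T|.-1)%:R :> rat)%R by rewrite ltr0n; case: #|T| hV => [|[|]].
have key : (\sum_u avg_cc e [set~u] <= #|T|%:R * avg_cc e [set: T])%R.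
  rewrite /avg_cc cardsT mulrA mulfV ?mul1r; last by rewrite gt_eqF.
  under eq_bigr do rewrite cardsC1.
  rewrite -mulr_sumr -(ler_pM2l n1) mulrA mulfV ?mul1r; last by rewrite gt_eqF.
  rewrite (exchange_big_dep xpredT) //= mulr_sumr.
  rewrite [X in (_ <= X)%R](eq_bigl xpredT) => [|i]; last by rewrite inE.
  apply: ler_sum => w _.
  rewrite (eq_bigl (fun u => u != w)); first exact: per_w.
  by move=> u; rewrite !inE eq_sym.
have [u Hu|H] := pickP (fun u => avg_cc e [set~u] <= avg_cc e [set: T])%R.
  by exists u.
exfalso.
have : (\sum_(u : T) avg_cc e [set: T] < \sum_u avg_cc e [set~u])%R.
  apply: ltr_sum.
    move: hV; rewrite cardE; case: (enum T) => //= a _ _.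
    by case: (index_enum T) (mem_index_enum a) => //.
  by move=> u _; rewrite ltNge H.
rewrite sumr_const -mulr_natl => H2.
by have := lt_le_trans H2 key; rewrite ltxx.
Qed.
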